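(* Let $\kappa_2$ be an infinite regular cardinal with $\kappa_2<\mathfrak b$. Then there is no $(\aleph_0,\kappa_2)$-peculiar cut in ${}^\omega\omega$.
   Context: For $f,g\in{}^\omega\omega$: $f\le^*g$ iff $f(n)\le g(n)$ for all but finitely many $n$; $f<^*g$ iff $f(n)<g(n)$ for all but finitely many $n$. $\mathfrak b$ is the least size of a family $F\subseteq{}^\omega\omega$ with no $g$ such that $f\le^*g$ for all $f\in F$. For infinite regular cardinals $\kappa_1,\kappa_2$, a $(\kappa_1,\kappa_2)$-peculiar cut in ${}^\omega\omega$ is a pair $(\langle f_i:i<\kappa_1\rangle,\langle f^\alpha:\alpha<\kappa_2\rangle)$ of sequences in ${}^\omega\omega$ such that: ($\alpha$) $f_j<^*f_i$ for $i<j<\kappa_1$; ($\beta$) $f^\alpha<^*f^\beta$ for $\alpha<\beta<\kappa_2$; ($\gamma$) $f^\alpha<^*f_i$ for all $i<\kappa_1$, $\alpha<\kappa_2$; ($\delta$) if $f\in{}^\omega\omega$ and $f\le^*f_i$ for all $i<\kappa_1$, then $f\le^*f^\alpha$ for some $\alpha<\kappa_2$; ($\varepsilon$) if $f\in{}^\omega\omega$ and $f^\alpha\le^*f$ for all $\alpha<\kappa_2$, then $f_i\le^*f$ for some $i<\kappa_1$. *)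

(* Defs.v *)
From Stdlib Require Import Arith.

Definition le_star (f g : nat -> nat) : Prop :=
  exists N, forall n, N <= n -> f n <= g n.
Definition lt_star (f g : nat -> nat) : Prop :=
  exists N, forall n, N <= n -> f n < g n.

Definition injects (A B : Type) : Prop :=
  exists h : A -> B, forall x y, h x = h y -> x = y.

Definition strict_well_order {K : Type} (lt : K -> K -> Prop) : Prop :=
  (forall x y z, lt x y -> lt y z -> lt x z) /\
  (forall x, ~ lt x x) /\
  (forall x y, lt x y \/ x = y \/ lt y x) /\
  well_founded lt.

(* (K, lt) is (the von Neumann ordinal of) an infinite regular cardinal:
   a well-order that is an initial ordinal (every proper initial segment has
   strictly smaller cardinality), infinite, and of cofinality equal to itself
   (every cofinal subset has the full cardinality). *)
Definition infinite_regular_cardinal {K : Type} (lt : K -> K -> Prop) : Prop :=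
  strict_well_order lt /\
  injects nat K /\
  (forall a : K, ~ injects K {x : K | lt x a}) /\
  (forall S : K -> Prop,
      (forall a, exists b, S b /\ (a = b \/ lt a b)) ->
      injects K {x : K | S x}).

Definition unbounded_family (F : (nat -> nat) -> Prop) : Prop :=
  ~ exists g, forall f, F f -> le_star f g.

(* kappa < b, where b = least size of an unbounded family:
   no unbounded family has cardinality <= |K|. *)
Definition lt_bounding_number (K : Type) : Prop :=
  forall F : (nat -> nat) -> Prop,
    unbounded_family F -> ~ injects {f | F f} K.

(* (kappa_1, kappa_2)-peculiar cut, with kappa_1 given by (I, ltI) and
   kappa_2 given by (K, ltK). *)
Definition peculiar_cut {I K : Type} (ltI : I -> I -> Prop) (ltK : K -> K -> Prop)
    (fl : I -> nat -> nat) (fu : K -> nat -> nat) : Prop :=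
  (forall i j, ltI i j -> lt_star (fl j) (fl i)) /\
  (forall a b, ltK a b -> lt_star (fu a) (fu b)) /\
  (forall i a, lt_star (fu a) (fl i)) /\
  (forall f, (forall i, le_star f (fl i)) -> exists a, le_star f (fu a)) /\
  (forall f, (forall a, le_star (fu a) f) -> exists i, le_star (fl i) f).

(* Main.v *)
Require Import Defs.
From Stdlib Require Import Arith Lia Classical ClassicalEpsilon.

Fixpoint hmin (fl : nat -> nat -> nat) (D : nat -> nat) (n k : nat) : nat :=
  match k with
  | 0 => fl 0 n
  | S k' => if D (S k') <=? n then Nat.min (hmin fl D n k') (fl (S k') n)
            else hmin fl D n k'
  end.

Lemma hmin_le fl D n k : forall j, j <= k -> D j <= n -> hmin fl D n k <= fl j n.
Proof.
  induction k as [|k IH]; intros j Hj HD; simpl.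
  - assert (j = 0) by lia; subst; lia.
  - destruct (Nat.eqb_spec j (S k)) as [->|Hne].
    + rewrite (proj2 (Nat.leb_le _ _) HD). lia.
    + destruct (D (S k) <=? n); specialize (IH j ltac:(lia) HD); lia.
Qed.

Lemma hmin_ge fl D n k x : x <= fl 0 n ->
  (forall j, j <= k -> D j <= n -> x <= fl j n) -> x <= hmin fl D n k.
Proof.
  induction k as [|k IH]; intros H0 H; simpl; auto.
  destruct (Nat.leb_spec (D (S k)) n).
  - apply Nat.min_glb; [apply IH; auto|apply H; lia].
  - apply IH; auto.
Qed.

Lemma bound_below (f : nat -> nat) J : exists N, forall j, j < J -> f j <= N.
Proof.
  induction J as [|J [N HN]].
  - exists 0; intros; lia.
  - exists (Nat.max N (f J)); intros j Hj.
    destruct (Nat.eq_dec j J) as [->|]; [lia|].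
    specialize (HN j ltac:(lia)); lia.
Qed.

Theorem proposition2p10 (K : Type) (ltK : K -> K -> Prop)
  (Hreg : infinite_regular_cardinal ltK) (Hb : lt_bounding_number K) :
  ~ exists (fl : nat -> nat -> nat) (fu : K -> nat -> nat),
      peculiar_cut Nat.lt ltK fl fu.
Proof.
  intros [fl [fu [Ha [Hbeta [Hg [Hd He]]]]]].
  set (d := fun a j => proj1_sig (constructive_indefinite_description _ (Hg j a))).
  assert (Hdspec : forall a j n, d a j <= n -> fu a n < fl j n).
  { intros a j n Hn. unfold d in Hn.
    destruct (constructive_indefinite_description _ (Hg j a)) as [N HN]; simpl in Hn.
    apply HN; exact Hn. }
  set (F := fun f => exists a, f = d a).
  assert (HD : exists D, forall f, F f -> le_star f D).
  { apply NNPP; intro Hn. apply (Hb F Hn).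
    exists (fun s : {f | F f} => proj1_sig (constructive_indefinite_description (fun a => proj1_sig s = d a) (proj2_sig s))).
    intros [x Hx] [y Hy]; simpl.
    destruct (constructive_indefinite_description _ Hx) as [a Ha'].
    destruct (constructive_indefinite_description _ Hy) as [b Hb']; simpl.
    intros ->. subst x y. f_equal. apply proof_irrelevance. }
  destruct HD as [D HD].
  set (h := fun n => hmin fl D n n).
  assert (Hup : forall a, le_star (fu a) h).
  { intro a. destruct (HD (d a) (ex_intro _ a eq_refl)) as [J HJ].
    destruct (bound_below (d a) J) as [N HN].
    exists (Nat.max N (d a 0)). intros n Hn. unfold h.
    apply hmin_ge.
    - apply Nat.lt_le_incl, Hdspec; lia.
    - intros j Hj HDj. apply Nat.lt_le_incl, Hdspec.
      destruct (Nat.lt_ge_cases j J) as [Hl|Hl].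
      + specialize (HN j Hl); lia.
      + specialize (HJ j Hl); lia. }
  destruct (He h Hup) as [i [N1 HN1]].
  destruct (Ha i (S i) ltac:(lia)) as [N2 HN2].
  set (n := Nat.max (Nat.max N1 N2) (Nat.max (S i) (D (S i)))).
  specialize (HN1 n ltac:(lia)). specialize (HN2 n ltac:(lia)).
  assert (h n <= fl (S i) n) by (apply hmin_le; lia).
  lia.
Qed.
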